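(* Any categorial sequential allocation mechanism with all agents optimistic has worst-case egalitarian rank equal to $n^p$ (the largest possible).
   Context: Basic categorized domain: $n$ agents, $p$ categories $D_i=\{1,\ldots,n\}$ of indivisible items, bundles $\mathfrak D=D_1\times\cdots\times D_p$; each agent $j$ has a linear order $R_j$ over $\mathfrak D$; a profile is $P_n=(R_1,\ldots,R_n)$. $\mathrm{Rank}(R,\vec d)$ is the position of $\vec d$ in $R$ (top $=1$, bottom $=n^p$). CSAM $f_\mathcal O$: given a linear order $\mathcal O$ over $\{1,\ldots,n\}\times\{1,\ldots,p\}$, in rounds $t=1,\ldots,np$, if the $t$-th element of $\mathcal O$ is $(j,i)$ then agent $j$ chooses an item $d_{j,i}$ from $D_{i,t}$, the items of $D_i$ not yet chosen at the start of round $t$. Agent $j$ receives $f^j_\mathcal O(P_n)=(d_{j,1},\ldots,d_{j,p})$. An optimistic agent $j$ choosing from $D_i$ in round $t$ picks the $i$-th component of her top-ranked bundle among available bundles, where a bundle is available to her if for each category $l$ from which she has already chosen its $l$-th component equals $d_{j,l}$, and for each other category $l$ its $l$-th component lies in $D_{l,t}$. Worst-case egalitarian rank: $\max_{P_n}\max_{j}\mathrm{Rank}(R_j,f^j_\mathcal O(P_n))$ over all profiles of $n$ agents. *)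

(* Defs.v *)
From mathcomp Require Import all_boot.
Set Implicit Arguments. Unset Strict Implicit. Unset Printing Implicit Defensive.

(* Agents, items of each category: 'I_n ; categories: 'I_p (0-indexed). *)
Definition bundle (n p : nat) := {ffun 'I_p -> 'I_n}.

(* A preference R over bundles, read as: R b d = "b is ranked at or above d". *)
Definition pref (n p : nat) := {ffun bundle n p -> {ffun bundle n p -> bool}}.

Definition lin_orderb (T : finType) (R : {ffun T -> {ffun T -> bool}}) : bool :=
  [&& [forall x, R x x],
      [forall x, forall y, (R x y && R y x) ==> (x == y)],
      [forall x, forall y, forall z, (R x y && R y z) ==> R x z] &
      [forall x, forall y, R x y || R y x]].

Definition Rank (n p : nat) (R : pref n p) (d : bundle n p) : nat :=
  #|[set b | R b d]|.

Definition profile (n p : nat) := {ffun 'I_n -> pref n p}.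

Definition is_profile (n p : nat) (P : profile n p) : bool :=
  [forall j, lin_orderb (P j)].

(* Partial allocation: A j i = Some d if agent j has already chosen d from D_i. *)
Definition alloc (n p : nat) := 'I_n -> 'I_p -> option 'I_n.

Definition avail_item (n p : nat) (A : alloc n p) (i : 'I_p) (d : 'I_n) : bool :=
  [forall k, A k i != Some d].

Definition avail_bundle (n p : nat) (A : alloc n p) (j : 'I_n) (b : bundle n p) : bool :=
  [forall l, if A j l is Some d then b l == d else avail_item A l (b l)].

(* optimistic choice of agent j from category i: the i-th component of her
   top-ranked available bundle (the fallback j is unreachable for linear orders) *)
Definition opt_choice (n p : nat) (R : pref n p) (A : alloc n p) (j : 'I_n) (i : 'I_p)
  : 'I_n :=
  match [pick b | avail_bundle A j b && [forall b', avail_bundle A j b' ==> R b b']] with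
  | Some b => b i
  | None => j
  end.

Definition step (n p : nat) (P : profile n p) (A : alloc n p) (ji : 'I_n * 'I_p)
  : alloc n p :=
  fun j' i' => if (j' == ji.1) && (i' == ji.2)
               then Some (opt_choice (P ji.1) A ji.1 ji.2) else A j' i'.

(* CSAM f_O with all agents optimistic; O listed as the sequence of its
   elements in order (t-th element = t-th round). *)
Definition csam (n p : nat) (O : seq ('I_n * 'I_p)) (P : profile n p) (j : 'I_n)
  : bundle n p :=
  [ffun i => odflt j (foldl (step P) (fun _ _ => None) O j i)].

Definition wc_egal_rank (n p : nat) (O : seq ('I_n * 'I_p)) : nat :=
  \max_(P : profile n p | is_profile P) \max_(j < n) Rank (P j) (csam O P j).

(* Main.v *)
Require Import Defs.
From mathcomp Require Import all_boot zify.
Set Implicit Arguments. Unset Strict Implicit. Unset Printing Implicit Defensive.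

Section Sim.
Variables (n p : nat) (O : seq ('I_n * 'I_p)).
Hypothesis hO : perm_eq O (enum {: 'I_n * 'I_p}).

Definition idx (k : 'I_n) (c : 'I_p) := index (k, c) O.

Lemma memO x : x \in O.
Proof. by rewrite (perm_mem hO) mem_enum. Qed.

Lemma uniqO : uniq O.
Proof. by rewrite (perm_uniq hO) enum_uniq. Qed.

Lemma idx_lt k c : idx k c < size O.
Proof. by rewrite /idx index_mem memO. Qed.

Lemma idx_inj k c k' c' : idx k c = idx k' c' -> (k, c) = (k', c').
Proof.
move=> h; rewrite -(nth_index (k,c) (memO (k,c))) -(nth_index (k,c) (memO (k',c'))).
by rewrite -/(idx k c) h.
Qed.

Variable P : profile n p.
Definition A0 : alloc n p := fun _ _ => None.
Definition At t := foldl (step P) A0 (take t O).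
Definition ch k c := opt_choice (P k) (At (idx k c)) k c.

Lemma Aval t : t <= size O -> forall k c,
  At t k c = if idx k c < t then Some (ch k c) else None.
Proof.
elim: t => [|t IH] ht k c; first by rewrite /At take0.
rewrite /At (take_nth (k, c)) // foldl_rcons -/(At t) /step.
case: eqP => [Ek|Nk] /=.
- case: eqP => [Ec|Nc] /=.
  + have Ex : nth (k, c) O t = (k, c).
      by move: Ek Ec; case: (nth (k, c) O t) => a b /= -> ->.
    have hi : idx k c = t by rewrite /idx -Ex index_uniq // uniqO.
    rewrite hi ltnSn /ch hi; congr (Some _); rewrite Ex.
    by [].

  + rewrite IH ?(ltnW ht) //.
    have : idx k c != t.
      apply/eqP=> hi; apply: Nc; have E := nth_index (k,c) (memO (k,c)).
      by rewrite -/(idx k c) hi in E; rewrite E.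
    by move=> ne; rewrite [idx k c < t.+1]ltnS [idx k c <= t]leq_eqVlt (negbTE ne).
- rewrite IH ?(ltnW ht) //.
  have : idx k c != t.
    apply/eqP=> hi; apply: Nk; have E := nth_index (k,c) (memO (k,c)).
    by rewrite -/(idx k c) hi in E; rewrite E.
  by move=> ne; rewrite [idx k c < t.+1]ltnS [idx k c <= t]leq_eqVlt (negbTE ne).
Qed.


Definition badw (x : 'I_n * 'I_p) : bool :=
  ~~ [forall k, (k != x.1) ==> (idx k x.2 < idx x.1 x.2)] &&
  [forall m, (idx x.1 x.2 < idx x.1 m) ==>
     [forall k, (k != x.1) ==> (idx k m < idx x.1 x.2)]].

Lemma idx_neq k c k' c' : (k, c) != (k', c') -> idx k c != idx k' c'.
Proof. by move=> H; apply/eqP => /idx_inj E; rewrite E eqxx in H. Qed.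

Lemma good_exists (hn : 0 < n) : exists j, forall l,
  (forall k, k != j -> idx k l < idx j l) \/
  exists m k, idx j l < idx j m /\ k != j /\ idx j l <= idx k m.
Proof.
case: (boolP [exists j, [forall l, ~~ badw (j, l)]]) => [/existsP[j Hj]|H].
  exists j => l; have := forallP Hj l; rewrite /badw /= negb_and negbK.
  case/orP => [/forallP F|].
    by left => k nk; exact: (implyP (F k) nk).
  rewrite negb_forall => /existsP[m]; rewrite negb_imply => /andP[lt].
  rewrite negb_forall => /existsP[k]; rewrite negb_imply -leqNgt => /andP[nk le].
  by right; exists m, k.
exfalso.
have Hb : forall j, exists l, badw (j, l).
  move=> j; move: H; rewrite negb_exists => /forallP /(_ j).
  by rewrite negb_forall => /existsP[l]; rewrite negbK => ?; exists l.
have [l0 Hl0] := Hb (Ordinal hn).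
case: (@arg_maxnP _ (Ordinal hn, l0) badw (fun x => idx x.1 x.2) Hl0).
move=> [j l] /= Hjl Hmax.
move: (Hjl); rewrite /badw /= => /andP[].
rewrite negb_forall => /existsP[k]; rewrite negb_imply -leqNgt => /andP[nk le] _.
have lt : idx j l < idx k l.
  rewrite ltn_neqAle le andbT; apply: idx_neq.
  by apply/negP => /eqP [E]; rewrite E eqxx in nk.
have [l' Hl'] := Hb k.
have := Hmax (k, l') Hl' => /= le'.
move: Hl'; rewrite /badw /= => /andP[_ /forallP /(_ l)].
rewrite (leq_ltn_trans le' lt) /= => /forallP /(_ j).
rewrite eq_sym nk /=.
move=> h; have := leq_trans h le'; by rewrite ltnn.
Qed.


Lemma avail_At u (hu : u <= size O) c d :
  avail_item (At u) c d = [forall k, (idx k c < u) ==> (ch k c != d)].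
Proof.
apply/forallP/forallP => H k; have := H k; rewrite Aval //.
- case: ifP => //= _ ne; apply/eqP => E; rewrite E eqxx in ne.
- case: ifP => //= _ ne; apply/eqP => [[E]]; rewrite E eqxx in ne.
Qed.

Lemma card_avail u (hu : u <= size O)
  (IHa : forall k c, idx k c < u -> avail_item (At (idx k c)) c (ch k c)) c :
  #|[set d | avail_item (At u) c d]| = n - #|[set k | idx k c < u]|.
Proof.
set S := [set k | idx k c < u].
have inj : {in S &, injective (fun k => ch k c)}.
  have key : forall k1 k2, idx k1 c < idx k2 c -> idx k2 c < u -> ch k1 c != ch k2 c.
    move=> k1 k2 lt12 lt2; have := IHa k2 c lt2.
    rewrite avail_At; last by apply: ltnW; apply: idx_lt.
    by move=> /forallP /(_ k1); rewrite lt12.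
  move=> k1 k2; rewrite !inE => h1 h2 E.
  apply/eqP; apply/negP => /negP ne.
  have : idx k1 c != idx k2 c by apply: idx_neq; apply/negP => /eqP [] /eqP; apply/negP.
  rewrite neq_ltn => /orP[lt|lt].
    by have := key _ _ lt h2; rewrite E eqxx.
  by have := key _ _ lt h1; rewrite E eqxx.
have -> : [set d | avail_item (At u) c d] = ~: ((fun k => ch k c) @: S).
  apply/setP => d; rewrite !inE avail_At //.
  apply/forallP/idP => [H|H k].
    apply/imsetP => [[k]]; rewrite inE => hk E.
    by have := H k; rewrite hk E eqxx.
  apply/implyP => hk; apply/eqP => E; move/negP: H; apply; apply/imsetP.
  by exists k; rewrite ?inE ?E.
by rewrite cardsCs setCK card_ord (card_in_imset inj).
Qed.

End Sim.

Definition mkpref n p (key : bundle n p -> nat) : pref n p :=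
  [ffun b => [ffun d => key d <= key b]].

Lemma lin_mkpref n p (key : bundle n p -> nat) : injective key -> lin_orderb (mkpref key).
Proof.
move=> inj; apply/and4P; split.
- by apply/forallP => x; rewrite !ffunE.
- apply/forallP => x; apply/forallP => y; apply/implyP; rewrite !ffunE => /andP[h1 h2].
  by apply/eqP; apply: inj; apply/eqP; rewrite eqn_leq h1 h2.
- apply/forallP => x; apply/forallP => y; apply/forallP => z; apply/implyP.
  by rewrite !ffunE => /andP[h1 h2]; apply: leq_trans h2 h1.
- by apply/forallP => x; apply/forallP => y; rewrite !ffunE leq_total.
Qed.

Lemma opt_spec n p (key : bundle n p -> nat) A j i :
  (exists b0, avail_bundle A j b0) ->
  exists b, [/\ avail_bundle A j b,
     (forall b', avail_bundle A j b' -> key b' <= key b) &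
     opt_choice (mkpref key) A j i = b i].
Proof.
case=> b0 H0; case: (@arg_maxnP _ b0 (avail_bundle A j) key H0) => b Hb Hmax.
rewrite /opt_choice; case: pickP => [b' /andP[Ha /forallP Hf] | Hn].
  exists b'; split => // b'' Hb''.
  by have := implyP (Hf b'') Hb''; rewrite !ffunE.
exfalso; have := Hn b; rewrite Hb /=; move/negP; apply.
by apply/forallP => b'; apply/implyP => H'; rewrite !ffunE; apply: Hmax.
Qed.

Section Main.
Variables (n p : nat) (O : seq ('I_n * 'I_p)).
Hypothesis hO : perm_eq O (enum {: 'I_n * 'I_p}).
Hypothesis hn : 0 < n.
Variable jstar : 'I_n.
Hypothesis Hgood : forall l,
  (forall k, k != jstar -> idx O k l < idx O jstar l) \/
  exists m k, idx O jstar l < idx O jstar m /\ k != jstar /\ idx O jstar l <= idx O k m.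

Definition z : 'I_n := Ordinal hn.
Definition w : bundle n p := [ffun _ => z].
Definition NB := #|{: bundle n p}|.
Definition key (f : bundle n p -> nat) (b : bundle n p) := f b * NB + enum_rank b.

Lemma key_inj f : injective (key f).
Proof.
move=> b b' E; apply: enum_rank_inj; apply: ord_inj.
have := congr1 (fun x => x %% NB) E; rewrite /key !modnMDl !modn_small //.
Qed.

Lemma key_lt f b b' : f b < f b' -> key f b < key f b'.
Proof.
move=> lt; rewrite /key; apply: (@leq_trans ((f b).+1 * NB)).
  by rewrite mulSn addnC ltn_add2r; apply: ltn_ord.
by apply: leq_trans (leq_addr _ _); apply: leq_mul.
Qed.

Definition score1 (b : bundle n p) : nat :=
  if [pick c | b c != z] is Some c then
    (if #|[set c | b c != z]| == 1 then (idx O jstar c).+2 else 1)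
  else 0.
Definition score2 (b : bundle n p) : nat := #|[set c | b c != z]|.

Definition Pr : profile n p :=
  [ffun j => if j == jstar then mkpref (key score1) else mkpref (key score2)].

Lemma Pr_profile : is_profile Pr.
Proof.
by apply/forallP => j; rewrite ffunE; case: ifP => _; apply: lin_mkpref; apply: key_inj.
Qed.


Definition Qp k c := ((ch O Pr k c == z) = (k == jstar)) /\
  avail_item (At O Pr (idx O k c)) c (ch O Pr k c).

Section Step.
Variable u : nat.
Hypothesis hu : u <= size O.
Hypothesis IH : forall k c, idx O k c < u -> Qp k c.

Let IHa k c (h : idx O k c < u) := (IH h).2.

Lemma z_avail c : ~~ (idx O jstar c < u) -> avail_item (At O Pr u) c z.
Proof.
move=> nj; rewrite avail_At //; apply/forallP => k; apply/implyP => hk.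
have [E _] := IH hk; rewrite E; apply/eqP => Ek; subst k; by rewrite hk in nj.
Qed.

Lemma card_avail' c : #|[set d | avail_item (At O Pr u) c d]| =
   n - #|[set k | idx O k c < u]|.
Proof. exact: card_avail. Qed.

Lemma some_avail j c : ~~ (idx O j c < u) -> exists y, avail_item (At O Pr u) c y.
Proof.
move=> nj.
have : 0 < #|[set d | avail_item (At O Pr u) c d]|.
  rewrite card_avail' subn_gt0.
  have : [set k | idx O k c < u] \subset ~: [set j].
    by apply/subsetP => k; rewrite !inE; apply: contraTneq => ->.
  move/subset_leq_card => h; have := cardsC [set j]; rewrite cards1 card_ord => hc.
  lia.
by case/card_gt0P => y; rewrite inE => ?; exists y.
Qed.

Lemma nonz_avail k c : k != jstar -> ~~ (idx O k c < u) ->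
  exists2 y, y != z & avail_item (At O Pr u) c y.
Proof.
move=> nk hk; case: (boolP (idx O jstar c < u)) => hj.
  have [y Hy] := some_avail hk; exists y => //.
  move: (Hy); rewrite avail_At // => /forallP /(_ jstar); rewrite hj /=.
  by have [E _] := IH hj; move: E; rewrite eqxx => /eqP ->; rewrite eq_sym.
have h2 : 1 < #|[set d | avail_item (At O Pr u) c d]|.
  rewrite card_avail'.
  have : [set k | idx O k c < u] \subset ~: [set k; jstar].
    apply/subsetP => k'; rewrite !inE negb_or => hk'.
    by apply/andP; split; apply/negP => /eqP E; subst k'; [rewrite hk' in hk | rewrite hk' in hj].
  move/subset_leq_card => h; have := cardsC [set k; jstar].
  rewrite cards2 nk card_ord => hc. lia.
have : ~~ ([set d | avail_item (At O Pr u) c d] \subset [set z]).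
  apply/negP => /subset_leq_card; rewrite cards1 => h.
  by have := leq_trans h2 h.
case/subsetPn => y; rewrite !inE => Hy ny; by exists y.
Qed.

Lemma bundle_exists j : exists b0, avail_bundle (At O Pr u) j b0.
Proof.
exists [ffun c => if At O Pr u j c is Some d then d
                  else odflt z [pick d | avail_item (At O Pr u) c d]].
apply/forallP => c; rewrite ffunE; case E: (At O Pr u j c) => [d|] //.
have nj : ~~ (idx O j c < u) by move: E; rewrite Aval //; case: ifP.
case: pickP => [y Hy|Hn] //=; exfalso.
by have [y Hy] := some_avail nj; have := Hn y; rewrite Hy.
Qed.

Lemma Qstep k c : idx O k c = u -> Qp k c.
Proof.
move=> hu'; rewrite /Qp /ch hu' ffunE.
have hN : At O Pr u k c = None by rewrite Aval // hu' ltnn.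
have nku : ~~ (idx O k c < u) by rewrite hu' ltnn.
case: (eqVneq k jstar) => [Ek|nk].
- subst k.
  have [b [Hb Hmax ->]] := opt_spec (key score1) c (bundle_exists jstar).
  have Hbc : avail_item (At O Pr u) c (b c) by have := forallP Hb c; rewrite hN.
  split => //; apply/eqP.
  have njc : ~~ (idx O jstar c < u) by rewrite hu' ltnn.
  have Hz := z_avail njc.
  case: (Hgood c) => [forced | [m [k' [lt1 [nk' le']]]]].
  + apply/eqP; apply/negPn/negP => nbz.
    have : #|[set d | avail_item (At O Pr u) c d]| = 1.
      rewrite card_avail'.
      have -> : [set k | idx O k c < u] = ~: [set jstar].
        apply/setP => k; rewrite !inE; case: (eqVneq k jstar) => [->|nk].
          by rewrite (negbTE njc).
        by rewrite -hu' forced.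
      have := cardsC [set jstar]; rewrite cards1 card_ord; lia.
    have : [set z; b c] \subset [set d | avail_item (At O Pr u) c d].
      by apply/subsetP => d; rewrite !inE => /orP[] /eqP ->.
    move/subset_leq_card; rewrite cards2 eq_sym nbz => h E; rewrite E in h.
    by [].
  + have nk'm : ~~ (idx O k' m < u) by rewrite -leqNgt -hu'.
    have [y ny Hy] := nonz_avail nk' nk'm.
    have lt1' : u < idx O jstar m by rewrite -hu'.
    set b' : bundle n p := [ffun c' => if c' == m then y else z].
    have Hb' : avail_bundle (At O Pr u) jstar b'.
      apply/forallP => c'; rewrite ffunE; case E: (At O Pr u jstar c') => [d|].
        move: E; rewrite Aval //; case: ifP => // hc [<-].
        have [Ez _] := IH hc; move: Ez; rewrite eqxx => /eqP ->.
        have : c' != m by apply/eqP => Em; subst c'; have := ltn_trans hc lt1'; rewrite ltnn.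
        by move/negbTE ->.
      move: E; rewrite Aval //; case: ifP => // hc _.
      case: eqP => [->|_] //; by apply: z_avail; rewrite hc.
    apply/eqP; apply/negPn/negP => nbz.
    have := Hmax b' Hb'; apply/negP; rewrite -ltnNge; apply: key_lt.
    have -> : score1 b' = (idx O jstar m).+2.
      rewrite /score1; case: pickP => [c0|Hn]; last by have := Hn m; rewrite ffunE eqxx ny.
      rewrite ffunE; case: (eqVneq c0 m) => [->|_]; last by rewrite eqxx.
      have -> : [set c | b' c != z] = [set m].
        by apply/setP => c'; rewrite !inE ffunE; case: (c' == m); rewrite ?ny ?eqxx.
      by move=> _; rewrite cards1.
    apply: (@leq_ltn_trans u.+2); last by rewrite ltnS ltnS -hu'.
    rewrite /score1; case: pickP => [c0 Hc0|] //; case: ifP => // /cards1P [c1 E].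
    have : c \in [set c | b c != z] by rewrite inE.
    have : c0 \in [set c | b c != z] by rewrite inE.
    by rewrite E !inE => /eqP -> /eqP <-; rewrite hu'.
- idtac.
  have [b [Hb Hmax ->]] := opt_spec (key score2) c (bundle_exists k).
  have Hbc : avail_item (At O Pr u) c (b c) by have := forallP Hb c; rewrite hN.
  split => //; apply/negP => /eqP bz.
  have [y ny Hy] := nonz_avail nk nku.
  set b' : bundle n p := [ffun c' => if c' == c then y else b c'].
  have Hb' : avail_bundle (At O Pr u) k b'.
    apply/forallP => c'; rewrite ffunE; case: eqP => [->|ne]; first by rewrite hN.
    exact: (forallP Hb c').
  have := Hmax b' Hb'; apply/negP; rewrite -ltnNge; apply: key_lt.
  rewrite /score2.
  have -> : [set c' | b' c' != z] = c |: [set c' | b c' != z].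
    by apply/setP => c'; rewrite !inE ffunE; case: (c' == c); rewrite ?ny.
  by rewrite cardsU1 inE bz eqxx.
Qed.

End Step.

Lemma Qall k c : Qp k c.
Proof.
suff H : forall u k c, idx O k c = u -> Qp k c by exact: H.
elim/ltn_ind => u IH k' c' hu'.
have hu : u <= size O by rewrite -hu'; apply: ltnW; apply: idx_lt.
apply: (Qstep hu _ hu') => k'' c'' lt; exact: IH lt _ _ (erefl _).
Qed.

Lemma csam_w : csam O Pr jstar = w.
Proof.
apply/ffunP => i; rewrite !ffunE.
have -> : foldl (step Pr) (fun _ _ => None) O jstar i = At O Pr (size O) jstar i.
  by rewrite /At take_size.
rewrite Aval // idx_lt /=; have [E _] := Qall jstar i.
  by move: E; rewrite eqxx => /eqP.
exact: hO.
Qed.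

Lemma score1_w : score1 w = 0.
Proof. by rewrite /score1; case: pickP => // c0; rewrite ffunE eqxx. Qed.

Lemma score1_pos b : b != w -> 0 < score1 b.
Proof.
move=> nb; rewrite /score1; case: pickP => [c0 _|Hn]; first by case: ifP.
exfalso; move/negP: nb; apply; apply/eqP/ffunP => c; rewrite ffunE.
by have := Hn c => /negbFE /eqP.
Qed.

Lemma Rank_w : Rank (Pr jstar) w = n ^ p.
Proof.
rewrite /Rank.
have -> : [set b | Pr jstar b w] = setT.
  apply/setP => b; rewrite !inE ffunE eqxx !ffunE.
  case: (eqVneq b w) => [->|nb]; first by rewrite leqnn.
  apply: ltnW; apply: key_lt; rewrite score1_w; exact: score1_pos.
by rewrite cardsT card_ffun !card_ord.
Qed.

End Main.

Theorem proposition3 (n p : nat) (O : seq ('I_n * 'I_p)) :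
  0 < n ->
  perm_eq O (enum {: 'I_n * 'I_p}) ->
  wc_egal_rank O = n ^ p.
Proof.
move=> hn hO; apply/eqP; rewrite eqn_leq; apply/andP; split.
  apply/bigmax_leqP => P _; apply/bigmax_leqP => j _.
  have E : n ^ p = #|{: bundle n p}| by rewrite card_ffun !card_ord.
  by rewrite /Rank E; apply: max_card.
have [jstar Hgood] := good_exists hO hn.
rewrite /wc_egal_rank.
have H := leq_bigmax_cond (P := fun P => is_profile P)
  (F := fun P : profile n p => \max_(j < n) Rank (P j) (csam O P j)) (Pr O hn jstar) (Pr_profile O hn jstar).
apply: leq_trans H => /=.
have H2 := leq_bigmax (F := fun j => Rank (Pr O hn jstar j) (csam O (Pr O hn jstar) j)) jstar.
apply: leq_trans H2 => /=.
by rewrite (csam_w hO hn Hgood) (Rank_w O hn jstar).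
Qed.
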